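(* Let $c,d$ be positive integers, $\alpha,\delta\in(0,1]$, and $C_0\subseteq\mathbb{F}_2^d$ a linear code with minimum distance $d_0$, all constants, with $d_0\delta>2$; let $\varepsilon_0=\frac{d_0}{2}-\frac1\delta>0$. Let $G=(L\cup R,E)$ be a $(c,d,\alpha,\delta)$-bipartite expander with $L=[n]$, let $x\in\mathbb{F}_2^n$ and $y\in T(G,C_0)$ with $d_H(x,y)\le\alpha n$. Consider the algorithm $\mathsf{RandDecode}$ which, on input $x$, repeatedly replaces $x$ by $\mathsf{RandFlip}(x)$ as long as $U(x)\neq\emptyset$, and then returns $x$. Then, on input $x$, $\mathsf{RandDecode}$ outputs $y$ in $O(n)$ time with probability $1-o(1)$.
   Context: Binary linear codes; $d_H$ Hamming distance. A bipartite graph $G=(L\cup R,E)$ is $(c,d)$-regular if left vertices have degree $c$ and right vertices degree $d$; $N(S)$ denotes the neighborhood of a vertex set $S$. A $(c,d,\alpha,\delta)$-bipartite expander is a $(c,d)$-regular bipartite graph with $|N(S)|\ge\delta c|S|$ for all $S\subseteq L$, $|S|\le\alpha|L|$. Tanner code: $L=[n]$; for each $v\in R$ a fixed ordering of $N(v)$ gives $x_{N(v)}\in\mathbb{F}_2^d$ (restriction of $x$ to $N(v)$); $T(G,C_0)=\{x\in\mathbb{F}_2^n: x_{N(v)}\in C_0\ \forall v\in R\}$. $U(x)=\{v\in R: x_{N(v)}\notin C_0\}$ (unsatisfied checks). For $z\in\mathbb{F}_2^d$, $\mathsf{Decode}(z)$ is the codeword of $C_0$ closest to $z$ in Hamming distance,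 ties broken by the lexicographically smallest. $\mathsf{RandFlip}(x)$: set $t=d_0/2$ and $p_1=\dots=p_n=0$; for each $v\in R$, let $w_v=\mathsf{Decode}(x_{N(v)})$; if $1\le d_H(w_v,x_{N(v)})<t$, let $i$ be the smallest element of $N(v)$ at which $w_v$ and $x_{N(v)}$ differ and increase $p_i$ by $\frac{t-d_H(w_v,x_{N(v)})}{ct}$. Then flip each $x_i$ independently with probability $p_i$ and return the result. The parameters $c,d,\alpha,\delta,C_0$ are constants, $n$ grows, and $o(1)$, $O(n)$ are with respect to $n$. Running time is in the RAM model with adjacency lists, with the implementation in which $U(x)$ and the values $p_i$ are maintained in data structures (initialized once in $O(n)$ time) allowing $U(x)$ to be enumerated in $O(|U(x)|)$ time and updated in $O(1)$ time per bit flip, so that only unsatisfied checks and indices with $p_i\neq0$ are enumerated. *)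

(* Defs.v *)
From HB Require Import structures.
From mathcomp Require Import all_boot all_order all_algebra.
From mathcomp Require Import reals.

Set Implicit Arguments.
Unset Strict Implicit.
Unset Printing Implicit Defensive.

Import Order.TTheory GRing.Theory Num.Theory.
Local Open Scope ring_scope.

Definition word (n : nat) := {ffun 'I_n -> bool}.

Definition zero_word (n : nat) : word n := [ffun => false].
Definition xorw (n : nat) (a b : word n) : word n := [ffun i => a i (+) b i].

Definition dH (n : nat) (a b : word n) : nat := #|[set i | a i != b i]|.

Definition linear_code (d : nat) (C : {set word d}) : Prop :=
  zero_word d \in C /\ (forall a b, a \in C -> b \in C -> xorw a b \in C).

Definition min_distance (d : nat) (C : {set word d}) (d0 : nat) : Prop :=
  (exists a b, [/\ a \in C, b \in C, a != b & dH a b = d0]) /\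
  (forall a b, a \in C -> b \in C -> a != b -> (d0 <= dH a b)%N).

Section Graph.
Variables (n m d : nat).
(* Bipartite graph with L = 'I_n, R = 'I_m; right vertex v has the ordered
   neighbourhood nbr v (a d-tuple of left vertices); this also fixes the
   ordering of N(v) used in the Tanner code. *)
Variable nbr : 'I_m -> d.-tuple 'I_n.

Definition biregular (c : nat) : Prop :=
  (forall v, uniq (nbr v)) /\ (forall i : 'I_n, #|[set v | i \in nbr v]| = c).

Definition nbhd (S : {set 'I_n}) : {set 'I_m} :=
  [set v | [exists j, tnth (nbr v) j \in S]].

Definition expander (R : realType) (c : nat) (alpha delta : R) : Prop :=
  biregular c /\
  (forall S : {set 'I_n}, #|S|%:R <= alpha * n%:R ->
     delta * c%:R * #|S|%:R <= (#|nbhd S|)%:R).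

Definition restr (x : word n) (v : 'I_m) : word d :=
  [ffun j => x (tnth (nbr v) j)].

Variable C0 : {set word d}.

Definition in_tanner (y : word n) : Prop := forall v, restr y v \in C0.

Definition unsat (x : word n) : {set 'I_m} := [set v | restr x v \notin C0].

(* lexicographic rank: first coordinate most significant, 0 < 1 *)
Definition lexrank (w : word d) : nat := (\sum_(j < d) (w j : nat) * 2 ^ (d.-1 - j))%N.

Definition dec_key (z w : word d) : nat := (dH w z * 2 ^ d + lexrank w)%N.

(* Decode(z): closest codeword, ties broken by lexicographically smallest *)
Definition decode (z : word d) : word d :=
  odflt (zero_word d) [pick w in C0 | [forall w' in C0, (dec_key z w <= dec_key z w')%N]].

Definition dist_v (x : word n) (v : 'I_m) : nat := dH (decode (restr x v)) (restr x v).

Definition differs_at (x : word n) (v : 'I_m) (i : 'I_n) : bool :=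
  [exists j, (tnth (nbr v) j == i) && (decode (restr x v) j != restr x v j)].

Definition firstdiff (x : word n) (v : 'I_m) : option 'I_n :=
  [pick i : 'I_n | differs_at x v i && [forall i' : 'I_n, differs_at x v i' ==> (i <= i')%N]].

Variables (R : realType) (c d0 : nat).

Definition tpar : R := d0%:R / 2.

Definition flipprob (x : word n) (i : 'I_n) : R :=
  \sum_(v < m | [&& (1 <= dist_v x v)%N, (dist_v x v)%:R < tpar & firstdiff x v == Some i])
     (tpar - (dist_v x v)%:R) / (c%:R * tpar).

(* Pr[RandFlip(x) = x'] : each bit flipped independently with prob p_i *)
Definition trans (x x' : word n) : R :=
  \prod_(i < n) (if x' i != x i then flipprob x i else 1 - flipprob x i).

Variable y : word n.

(* succ T b x = probability that RandDecode started at x halts within T rounds,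
   with output y, and with total per-round cost  sum_t |U(x_t)|  at most b.
   (Per-round running time of the stated implementation is Theta(|U(x_t)|).) *)
Fixpoint succ (T b : nat) (x : word n) : R :=
  match T with
  | 0 => if unsat x == set0 then (x == y)%:R else 0
  | T'.+1 =>
      if unsat x == set0 then (x == y)%:R
      else if (#|unsat x| <= b)%N then
        \sum_(x' : word n) trans x x' * succ T' (b - #|unsat x|) x'
      else 0
  end.

(* Since every executed round costs >= 1, b rounds suffice. *)
Definition success_prob (b : nat) (x : word n) : R := succ b b x.

End Graph.

(* Main.v *)
Require Import Defs.
From HB Require Import structures.
From mathcomp Require Import all_boot all_order all_algebra.
From mathcomp Require Import reals sequences exp.
From mathcomp Require Import ring lra.
Import Order.TTheory GRing.Theory Num.Theory.
Set Implicit Arguments.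
Unset Strict Implicit.
Unset Printing Implicit Defensive.

Section DH.
Variable k : nat.
Implicit Types a b e : word k.

Lemma dHC a b : dH a b = dH b a.
Proof. by rewrite /dH; apply: eq_card => i; rewrite !inE eq_sym. Qed.

Lemma dHaa a : dH a a = 0%N.
Proof. by rewrite /dH; apply/eqP; rewrite cards_eq0; apply/eqP/setP => i; rewrite !inE eqxx. Qed.

Lemma dH_eq0 a b : dH a b = 0%N -> a = b.
Proof.
move/eqP; rewrite /dH cards_eq0 => /eqP H; apply/ffunP => i.
apply/eqP; apply/negPn; apply/negP => Hi.
have : i \in [set i | a i != b i] by rewrite inE.
by rewrite H inE.
Qed.

Lemma dH_tri a b e : (dH a e <= dH a b + dH b e)%N.
Proof.
rewrite /dH; apply: leq_trans (leq_card_setU _ _).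
apply: subset_leq_card; apply/subsetP => i; rewrite !inE.
by case: (a i); case: (b i); case: (e i).
Qed.

End DH.

Lemma sum_pow2_lt (d : nat) : (\sum_(j < d) 2 ^ (d.-1 - j) < 2 ^ d)%N.
Proof.
elim: d => [|d IH]; first by rewrite big_ord0.
rewrite big_ord_recl /= subn0.

have -> : (\sum_(i < d) 2 ^ (d - (bump 0 i)) = \sum_(i < d) 2 ^ (d.-1 - i))%N.
  apply: eq_bigr => i _; by rewrite /bump /= add1n subnS predn_sub.
rewrite (expnS 2 d) mul2n -addnn ltn_add2l //.
Qed.

Lemma lexrank_lt (d : nat) (w : word d) : (lexrank w < 2 ^ d)%N.
Proof.
apply: leq_ltn_trans (sum_pow2_lt d); apply: leq_sum => j _.
by case: (w j); rewrite ?mul1n ?mul0n.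
Qed.

Section Dec.
Variables (d : nat) (C0 : {set word d}).
Hypothesis z0 : zero_word d \in C0.

Lemma decode_spec z : decode C0 z \in C0 /\
  forall w, w \in C0 -> (dH (decode C0 z) z <= dH w z)%N.
Proof.
rewrite /decode.
case: pickP => [w /andP [wC /forallP H] | H] /=.
  split => // w' w'C.
  have := H w'; rewrite w'C /= /dec_key => Hk.
  have Hl := lexrank_lt w'.
  have : (dH w z * 2 ^ d < (dH w' z).+1 * 2 ^ d)%N.
    rewrite mulSn; apply: leq_ltn_trans (leq_trans (leq_addr _ _) Hk) _.
    by rewrite addnC ltn_add2r.
  by rewrite ltn_pmul2r ?expn_gt0.
exfalso.
case: (arg_minnP (dec_key z) z0) => w wC Hw.
have := H w => /negbT /negP; apply; apply/andP; split; first exact: wC.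
apply/forallP => w'; apply/implyP => w'C.
exact: Hw.
Qed.

Lemma decode_in z : decode C0 z \in C0.
Proof. by case: (decode_spec z). Qed.

Lemma decode_min z w : w \in C0 -> (dH (decode C0 z) z <= dH w z)%N.
Proof. by case: (decode_spec z) => _; apply. Qed.

Lemma decode_self z : z \in C0 -> decode C0 z = z.
Proof.
move=> zC; apply: dH_eq0; apply/eqP; rewrite -leqn0.
by rewrite -(dHaa z); apply: decode_min.
Qed.
End Dec.

Section Comb.
Variables (n m d : nat) (nbr : 'I_m -> d.-tuple 'I_n) (C0 : {set word d}) (c : nat) (y : word n).
Hypotheses (z0 : zero_word d \in C0) (breg : biregular nbr c) (yT : in_tanner nbr C0 y).

Definition ES (x : word n) : {set 'I_n} := [set i | x i != y i].
Definition wv (x : word n) v : nat := #|[set j | tnth (nbr v) j \in ES x]|.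

Lemma wvE x v : dH (restr nbr x v) (restr nbr y v) = wv x v.
Proof. by apply: eq_card => j; rewrite !inE !ffunE. Qed.

Lemma nbhd_wv x v : (v \in nbhd nbr (ES x)) = (0 < wv x v)%N.
Proof.
rewrite inE card_gt0; apply/existsP/set0Pn => [[j Hj]|[j]].
  by exists j; rewrite inE.
by rewrite inE => Hj; exists j.
Qed.

Lemma restr_out x v : v \notin nbhd nbr (ES x) -> restr nbr x v = restr nbr y v.
Proof.
rewrite nbhd_wv -eqn0Ngt -wvE => /eqP; exact: dH_eq0.
Qed.

Lemma dist_le_wv x v : (dist_v nbr C0 x v <= wv x v)%N.
Proof. rewrite /dist_v -wvE [dH (restr nbr x v) _]dHC; exact: (decode_min z0 (restr nbr x v) (yT v)). Qed.

Lemma dist0 x v : restr nbr x v \in C0 -> dist_v nbr C0 x v = 0%N.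
Proof. by move=> H; rewrite /dist_v (decode_self z0) // dHaa. Qed.

Lemma sum_wv x : (\sum_v wv x v = c * #|ES x|)%N.
Proof.
have E1 v : wv x v = (\sum_(i in ES x) (i \in nbr v : nat))%N.
  rewrite /wv -sum1_card.
  rewrite (big_mkcond (fun j => j \in _)) /=.
  rewrite (eq_bigr (fun j => ((tnth (nbr v) j) \in ES x : nat))); last first.
    by move=> j _; rewrite inE; case: ifP.
  rewrite -(big_tuple _ _ (nbr v) predT (fun i => (i \in ES x : nat))) /=.
  rewrite big_uniq; last by case: breg.
  rewrite big_mkcond [RHS]big_mkcond /=; apply: eq_bigr => i _.
  by case: (i \in ES x); case: (i \in nbr v).
rewrite (eq_bigr _ (fun v _ => E1 v)) exchange_big /=.
rewrite -[X in (c * X)%N]sum1_card big_distrr /=; apply: eq_bigr => i _.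
rewrite muln1; case: breg => _ /(_ i) <-; rewrite -sum1_card [RHS]big_mkcond /=.
by apply: eq_bigr => v _; rewrite inE; case: (i \in nbr v).
Qed.

Lemma card_nbhd x : (#|nbhd nbr (ES x)| <= c * #|ES x|)%N.
Proof.
rewrite -sum_wv -sum1_card [X in (_ <= X)%N](bigID (fun v => v \in nbhd nbr (ES x))) /=.
apply: leq_trans (leq_addr _ _); apply: leq_sum => v; rewrite nbhd_wv; done.
Qed.

Lemma unsat_sub x : unsat nbr C0 x \subset nbhd nbr (ES x).
Proof.
apply/subsetP => v; rewrite inE; apply: contraR => /restr_out ->; exact: yT.
Qed.

End Comb.

Section FD.
Variables (n m d : nat) (nbr : 'I_m -> d.-tuple 'I_n) (C0 : {set word d}).

Lemma fd_some x v i : firstdiff nbr C0 x v = Some i -> differs_at nbr C0 x v i.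
Proof. by rewrite /firstdiff; case: pickP => // i' /andP[H _] [<-]. Qed.

Lemma differs_memP x v i : differs_at nbr C0 x v i ->
  exists j, tnth (nbr v) j = i /\ decode C0 (restr nbr x v) j != restr nbr x v j.
Proof. by case/existsP => j /andP[/eqP H1 H2]; exists j. Qed.

Lemma fd_mem x v i : firstdiff nbr C0 x v = Some i -> i \in nbr v.
Proof. by move/fd_some/differs_memP => [j [<- _]]; apply: mem_tnth. Qed.

Lemma fd_exists x v : decode C0 (restr nbr x v) != restr nbr x v ->
  exists i, firstdiff nbr C0 x v = Some i.
Proof.
move=> H.
have [j Hj] : exists j, decode C0 (restr nbr x v) j != restr nbr x v j.
  apply/existsP; move: H; apply: contraR; rewrite negb_exists => /forallP H.
  by apply/eqP/ffunP => j; apply/eqP; move: (H j); rewrite negbK.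
have Hi0 : differs_at nbr C0 x v (tnth (nbr v) j).
  by apply/existsP; exists j; rewrite eqxx.
rewrite /firstdiff; case: pickP => [i _|Hn]; first by exists i.
exfalso; case: (arg_minnP (fun i : 'I_n => nat_of_ord i) Hi0) => i Hi Hmin.
have := Hn i => /negbT /negP; apply; apply/andP; split => //.
by apply/forallP => i'; apply/implyP; apply: Hmin.
Qed.
End FD.

Local Open Scope ring_scope.

Section Real.
Variables (R : realType) (n m d : nat) (nbr : 'I_m -> d.-tuple 'I_n) (C0 : {set word d}) (c d0 : nat) (y : word n).
Hypotheses (z0 : zero_word d \in C0) (md : min_distance C0 d0) (breg : biregular nbr c) (yT : in_tanner nbr C0 y)
  (c_gt0 : (0 < c)%N) (d0_gt0 : (0 < d0)%N).

Local Notation t := (tpar R d0).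
Local Notation dist := (dist_v nbr C0).
Local Notation fd := (firstdiff nbr C0).
Definition cond (x : word n) v : bool := ((1 <= dist x v)%N && ((dist x v)%:R < t)).
Definition av (x : word n) v : R := (t - (dist x v)%:R) / (c%:R * t).
Local Notation p := (flipprob nbr C0 R c d0).

Lemma t_gt0 : 0 < t.
Proof. by rewrite /tpar divr_gt0 // ltr0n. Qed.

Lemma c_gt0R : 0 < c%:R :> R.
Proof. by rewrite ltr0n. Qed.

Lemma ct_gt0 : 0 < c%:R * t.
Proof. by rewrite mulr_gt0 // ?t_gt0 ?c_gt0R. Qed.

Lemma av_ge0 x v : cond x v -> 0 <= av x v.
Proof.
case/andP => _ H; rewrite /av divr_ge0 ?subr_ge0 ?(ltW H) //.
exact: ltW ct_gt0.
Qed.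

Lemma av_le x v : av x v <= c%:R^-1.
Proof.
rewrite /av ler_pdivrMr ?ct_gt0 // mulrA mulVf ?mul1r; last by rewrite lt0r_neq0 // c_gt0R.
by rewrite lerBlDr lerDl ler0n.
Qed.

Lemma p_gen (F : 'I_n -> R) x :
  \sum_i F i * p x i = \sum_v (if cond x v then oapp F 0 (fd x v) * av x v else 0).
Proof.
rewrite /flipprob.
under eq_bigr do rewrite big_distrr /= big_mkcond /=.
rewrite exchange_big /=; apply: eq_bigr => v _.
rewrite /cond.
case H1: (0 < dist x v)%N => /=; last by rewrite big1 // => i; rewrite H1.
case H2: ((dist x v)%:R < t) => /=; last by rewrite big1.
case E: (fd x v) => [i0|] /=; last by rewrite mul0r big1.
rewrite (bigD1 i0) //= eqxx big1 ?addr0 // => i /negbTE Hi.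
have -> : (Some i0 == Some i) = false by apply/negbTE; apply: contraFN Hi => /eqP [->]. by [].
Qed.

Definition sgn (x : word n) i : R := if x i != y i then 1 else -1.

Lemma G_bound x v : (1 <= wv nbr y x v)%N ->
  (t - (wv nbr y x v)%:R) / (c%:R * t) <=
  (if cond x v then oapp (sgn x) 0 (fd x v) * av x v else 0).
Proof.
move=> w1.
have zyC := yT v.
have wE := wvE nbr y x v.
have distE : dist x v = dH (decode C0 (restr nbr x v)) (restr nbr x v) by [].
have ctp := ct_gt0.
have key : forall k : nat, (d0 <= dist x v + k)%N -> (k <= wv nbr y x v)%N ->
   (t - (wv nbr y x v)%:R) / (c%:R * t) <= - av x v.
  move=> k H1 H2; rewrite /av -mulNr ler_wpM2r ?invr_ge0 ?(ltW ctp) //.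
  have : (d0%:R <= (dist x v)%:R + (wv nbr y x v)%:R :> R).
    rewrite -natrD ler_nat; apply: leq_trans H1 _; by rewrite leq_add2l.
  rewrite /tpar => H; lra.
case Hc: (cond x v).
  move/andP: (Hc) => [d1 dlt].
  have Dz : decode C0 (restr nbr x v) != restr nbr x v.
    apply/negP => /eqP E; move: d1; by rewrite distE E dHaa.
  case: (fd_exists Dz) => i Hi; rewrite Hi /=.
  case: (boolP (decode C0 (restr nbr x v) == restr nbr y v)) => [/eqP DE | DN].
    move: (fd_some Hi) => /differs_memP [j [Hj Hd]].
    have -> : sgn x i = 1.
      rewrite /sgn; move: Hd; rewrite DE !ffunE Hj => Hd.
      by rewrite eq_sym Hd.
    rewrite mul1r /av distE DE -wE dHC.
    by [].
  have Hd0 := md.2 _ _ (decode_in z0 (restr nbr x v)) zyC DN.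
  have Hk : (d0 <= dist x v + wv nbr y x v)%N.
    apply: leq_trans Hd0 _; rewrite -wE distE; exact: dH_tri.
  have := key _ Hk (leqnn _).
  have := av_ge0 Hc.
  rewrite /sgn; case: ifP => _ H1 H2; lra.
have tw : t <= (wv nbr y x v)%:R.
  move/negbT: Hc; rewrite /cond negb_and -leqNgt -real_leNgt ?num_real //.
  case/orP => [H|H].
    rewrite leqn0 distE in H; move/eqP/dH_eq0: H => E.
    have zC : restr nbr x v \in C0 by rewrite -E decode_in.
    have N : restr nbr x v != restr nbr y v.
      apply/negP => /eqP E2; move: w1; by rewrite -wE E2 dHaa.
    have := md.2 _ _ zC zyC N; rewrite wE -(ler_nat R) /tpar => H2.
    have : 0 <= d0%:R :> R by rewrite ler0n.
    lra.
  apply: le_trans H _; rewrite ler_nat; exact: dist_le_wv.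
rewrite pmulr_lle0 ?invr_gt0 //; lra.
Qed.


Lemma cond_wv x v : cond x v -> (0 < wv nbr y x v)%N.
Proof. by case/andP => H _; apply: leq_trans H (dist_le_wv z0 yT x v). Qed.

Lemma sgn_sum (delta : R) x :
  delta * c%:R * #|ES y x|%:R <= #|nbhd nbr (ES y x)|%:R ->
  (delta - t^-1) * #|ES y x|%:R <= \sum_i sgn x i * p x i.
Proof.
move=> Hexp; rewrite p_gen.
have ctp := ct_gt0.
apply: le_trans (_ : \sum_v (t * ((0 < wv nbr y x v)%N)%:R - (wv nbr y x v)%:R) / (c%:R * t) <= _);
  last first.
  apply: ler_sum => v _; case: (posnP (wv nbr y x v)) => [w0|wpos].
    have -> : cond x v = false.
      apply/negbTE/negP => /cond_wv; by rewrite w0.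
    by rewrite w0 /= mulr0 subrr mul0r.
  by rewrite mulr1; apply: G_bound.
rewrite -mulr_suml sumrB -mulr_sumr.
have -> : \sum_v ((0 < wv nbr y x v)%N)%:R = #|nbhd nbr (ES y x)|%:R :> R.
  rewrite -sum1_card natr_sum [RHS]big_mkcond /=; apply: eq_bigr => v _.
  by rewrite nbhd_wv; case: (0 < _)%N.
rewrite -natr_sum (sum_wv y breg).
rewrite ler_pdivlMr // natrM.
have tp := t_gt0.
have H1 : t * (delta * c%:R * #|ES y x|%:R) <= t * #|nbhd nbr (ES y x)|%:R.
  by rewrite ler_wpM2l // ltW.
have -> : (delta - t^-1) * #|ES y x|%:R * (c%:R * t) =
   t * (delta * c%:R * #|ES y x|%:R) - c%:R * #|ES y x|%:R * (t^-1 * t).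
  by ring.
rewrite mulVf ?mulr1 ?lt0r_neq0 //.
lra.
Qed.

Lemma p_ge0 x i : 0 <= p x i.
Proof.
rewrite /flipprob sumr_ge0 // => v /and3P [H1 H2 _].
by apply: (@av_ge0 x v); rewrite /cond H1 H2.
Qed.

Lemma p_le1 x i : p x i <= 1.
Proof.
rewrite /flipprob.
apply: le_trans (_ : \sum_(v | i \in nbr v) c%:R^-1 <= _).
  rewrite big_mkcond [X in _ <= X]big_mkcond; apply: ler_sum => v _.
  case: ifP => [/and3P[_ _ /eqP Hf]|_]; first by rewrite (fd_mem Hf); apply: av_le.
  by case: ifP => //; rewrite invr_ge0 ler0n.
rewrite sumr_const.
case: breg => _ /(_ i); rewrite cardsE => ->.
by rewrite -[_ *+ c]mulr_natr mulVf // lt0r_neq0 // c_gt0R.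
Qed.

Lemma p_tot x : \sum_i p x i <= #|ES y x|%:R.
Proof.
have := p_gen (fun _ => 1) x; under eq_bigr do rewrite mul1r.
move=> ->.
apply: le_trans (_ : \sum_v ((0 < wv nbr y x v)%N)%:R / c%:R <= _).
  apply: ler_sum => v _; case Hc: (cond x v); last first.
    by rewrite divr_ge0 ?ler0n.
  rewrite (cond_wv Hc) mul1r.
  apply: le_trans (av_le x v).
  case: (fd x v) => [i|] /=; first by rewrite mul1r.
  by rewrite mul0r; apply: av_ge0.
rewrite -mulr_suml.
have -> : \sum_v ((0 < wv nbr y x v)%N)%:R = #|nbhd nbr (ES y x)|%:R :> R.
  rewrite -sum1_card natr_sum [RHS]big_mkcond /=; apply: eq_bigr => v _.
  by rewrite nbhd_wv; case: (0 < _)%N.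
rewrite ler_pdivrMr ?c_gt0R // -natrM ler_nat mulnC.
exact: card_nbhd.
Qed.

Lemma unsat_card x : (#|unsat nbr C0 x| <= c * #|ES y x|)%N.
Proof.
apply: leq_trans (subset_leq_card (unsat_sub yT x)) _.
exact: card_nbhd.
Qed.

Lemma good_done (delta : R) x : 0 < delta - t^-1 ->
  delta * c%:R * #|ES y x|%:R <= #|nbhd nbr (ES y x)|%:R ->
  unsat nbr C0 x = set0 -> x = y.
Proof.
move=> gp Hexp U0.
have Hs := sgn_sum Hexp; rewrite p_gen big1 in Hs; last first.
  move=> v _; have Hv : restr nbr x v \in C0.
    apply/negPn/negP => H.
    have : v \in unsat nbr C0 x by rewrite inE.
    by rewrite U0 inE.
  by rewrite /cond (dist0 z0 Hv).
have s0 : #|ES y x| = 0%N.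
  apply/eqP; rewrite -(eqr_nat R) eq_le ler0n andbT.
  by rewrite -(pmulr_rle0 _ gp).
apply/ffunP => i; apply/eqP; apply/negPn/negP => Hi.
have : i \in ES y x by rewrite inE.
by move/eqP: s0; rewrite cards_eq0 => /eqP ->; rewrite inE.
Qed.

End Real.

Section Prob.
Variables (R : realType) (n m d : nat) (nbr : 'I_m -> d.-tuple 'I_n) (C0 : {set word d}) (c d0 : nat) (y : word n).

Local Notation p := (flipprob nbr C0 R c d0).
Local Notation tr := (trans nbr C0 R c d0).

Lemma trans_prod x (f : 'I_n -> bool -> R) :
  \sum_(x' : word n) tr x x' * \prod_i f i (x' i) =
  \prod_i ((1 - p x i) * f i (x i) + p x i * f i (~~ x i)).
Proof.
rewrite /trans.
have E : forall x' : word n, tr x x' * \prod_i f i (x' i) =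
   \prod_i ((if x' i != x i then p x i else 1 - p x i) * f i (x' i)).
  by move=> x'; rewrite big_split.
rewrite (eq_bigr _ (fun x' _ => E x')).
rewrite -(bigA_distr_bigA (fun i b => (if b != x i then p x i else 1 - p x i) * f i b)) /=.
apply: eq_bigr => i _; rewrite big_bool /=.
by case: (x i) => /=; rewrite addrC.
Qed.

Lemma trans_sum1 x : \sum_(x' : word n) tr x x' = 1.
Proof.
have := trans_prod x (fun _ _ => 1).
have -> : \prod_(i < n) ((1 - p x i) * 1 + p x i * 1) = 1.
  by apply: big1 => i _; rewrite !mulr1 subrK.
move=> <-; apply: eq_bigr => x' _.
by rewrite big1_eq mulr1.
Qed.

Hypotheses (z0 : zero_word d \in C0) (md : min_distance C0 d0) (breg : biregular nbr c) (yT : in_tanner nbr C0 y)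
  (c_gt0 : (0 < c)%N) (d0_gt0 : (0 < d0)%N).

Let pge0 x i : 0 <= p x i := p_ge0 R nbr C0 c_gt0 d0_gt0 x i.
Let ple1 x i : p x i <= 1 := p_le1 R C0 breg c_gt0 d0_gt0 x i.

Lemma trans_ge0 x x' : 0 <= tr x x'.
Proof.
apply: prodr_ge0 => i _; case: ifP => _.
  exact: pge0.
rewrite subr_ge0; exact: ple1.
Qed.

Lemma succ_ge0 T b x : 0 <= succ nbr C0 R c d0 y T b x.
Proof.
elim: T b x => [|T IH] b x /=; first by case: ifP => //; case: (x == y).
case: ifP => _; first by case: (x == y).
case: ifP => _ //.
by apply: sumr_ge0 => x' _; rewrite mulr_ge0 // trans_ge0.
Qed.

Variable eta : R.
Definition Wt (x : word n) : R := expR (eta * #|ES y x|%:R).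
Definition uu (x : word n) i : R :=
  if x i != y i then p x i * (expR (- eta) - 1) else p x i * (expR eta - 1).

Lemma Wt_prod x : Wt x = \prod_i expR (eta * (x i != y i)%:R).
Proof.
rewrite /Wt -expR_sum -mulr_sumr -natr_sum -sum1_card big_mkcond /=.
congr (expR (eta * _%:R)); apply: eq_bigr => i _; rewrite inE.
by case: (x i != y i).
Qed.

Lemma W_step x : \sum_x' tr x x' * Wt x' <= Wt x * expR (\sum_i uu x i).
Proof.
under eq_bigr do rewrite Wt_prod.
rewrite (trans_prod x (fun i b => expR (eta * (b != y i)%:R))) Wt_prod expR_sum -big_split /=.
apply: ler_prod => i _; apply/andP; split.
  apply: addr_ge0; apply: mulr_ge0; rewrite ?expR_ge0 ?pge0 //.
  by rewrite subr_ge0 ple1.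
have pi0 := pge0 x i.
have pi1 := ple1 x i.
have e1 : expR eta * expR (- eta) = 1 by rewrite -expRD subrr expR0.
have epos := expR_gt0 eta.
rewrite /uu.
have -> : (~~ x i != y i) = ~~ (x i != y i) by case: (x i); case: (y i).
case: (x i != y i) => /=; rewrite ?mulr1 ?mulr0 expR0.
  have H := expR_ge1Dx (p x i * (expR (- eta) - 1)).
  apply: le_trans (_ : expR eta * (1 + p x i * (expR (- eta) - 1)) <= _).
    have -> : (1 - p x i) * expR eta + p x i * 1 = expR eta * (1 + p x i * (expR (- eta) - 1)).
      transitivity ((1 - p x i) * expR eta + p x i * (expR eta * expR (- eta))); first by rewrite e1.
      ring.
    by [].
  by rewrite ler_wpM2l // ltW.
rewrite mul1r.
have H := expR_ge1Dx (p x i * (expR eta - 1)).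
apply: le_trans H; rewrite le_eqVlt; apply/orP; left; apply/eqP; ring.
Qed.

Let ptot x : \sum_i p x i <= #|ES y x|%:R.
Proof. by apply: p_tot. Qed.

Lemma u_sum x (A B gam : R) : 0 <= A -> A <= 1 - expR (- eta) -> expR eta - 1 <= B -> A <= B ->
  gam * #|ES y x|%:R <= \sum_i sgn R y x i * p x i ->
  \sum_i uu x i <= - A * gam * #|ES y x|%:R + (B - A) * #|ES y x|%:R.
Proof.
move=> A0 HA HB AB Hg.
apply: le_trans (_ : \sum_i (- A * (sgn R y x i * p x i) + (B - A) * p x i) <= _).
  apply: ler_sum => i _; have pi0 := pge0 x i.
  rewrite /uu /sgn; case: ifP => _; nra.
rewrite big_split /= -!mulr_sumr.
have := ptot x; nra.
Qed.

Lemma expN_bound : 0 <= eta -> eta / (1 + eta) <= 1 - expR (- eta).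
Proof.
move=> e0; rewrite expRN.
have H := expR_ge1Dx eta.
have Hp : 0 < 1 + eta by lra.
have H2 : (expR eta)^-1 <= (1 + eta)^-1.
  by rewrite lef_pV2 ?posrE ?expR_gt0.
have -> : eta / (1 + eta) = 1 - (1 + eta)^-1.
  by field; rewrite lt0r_neq0.
lra.
Qed.

Lemma exp_upper : 0 <= eta < 1 -> expR eta - 1 <= eta / (1 - eta).
Proof.
case/andP=> e0 e1.
have H := expR_ge1Dx (- eta).
rewrite expRN in H.
have Hp : 0 < 1 - eta by lra.
have Hq : 1 - eta <= (expR eta)^-1 by lra.
have : expR eta <= (1 - eta)^-1.
  by rewrite -lef_pV2 ?posrE ?invr_gt0 ?expR_gt0 // invrK.
have -> : eta / (1 - eta) = (1 - eta)^-1 - 1 by field; rewrite lt0r_neq0.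
lra.
Qed.

End Prob.

Section Main.
Variables (R : realType) (n m d : nat) (nbr : 'I_m -> d.-tuple 'I_n) (C0 : {set word d}) (c d0 : nat) (y : word n).
Hypotheses (z0 : zero_word d \in C0) (md : min_distance C0 d0) (breg : biregular nbr c) (yT : in_tanner nbr C0 y)
  (c_gt0 : (0 < c)%N) (d0_gt0 : (0 < d0)%N).
Variables (alpha delta eta A B : R).
Hypothesis Hexp_all : forall S : {set 'I_n}, #|S|%:R <= alpha * n%:R ->
  delta * c%:R * #|S|%:R <= #|nbhd nbr S|%:R.
Hypotheses (gpos : 0 < delta - (tpar R d0)^-1) (eta0 : 0 <= eta) (A0 : 0 <= A)
  (HA : A <= 1 - expR (- eta)) (HB : expR eta - 1 <= B) (AB : A <= B).
Let theta := A * (delta - (tpar R d0)^-1) - (B - A).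
Hypotheses (theta0 : 0 <= theta) (theta_eta : theta <= eta).

Local Notation p := (flipprob nbr C0 R c d0).
Local Notation tr := (trans nbr C0 R c d0).
Local Notation sc := (succ nbr C0 R c d0 y).
Local Notation s x := (#|ES y x|%:R : R).
Definition good (x : word n) := s x <= alpha * n%:R.
Let kappa := theta / c%:R.
Let q := expR (- (theta * (alpha * n%:R))).
Let h2 (x : word n) (b : nat) := expR (eta * s x - kappa * b%:R).

Lemma cR : 0 < c%:R :> R. Proof. by rewrite ltr0n. Qed.

Lemma kappa_u x : (kappa * #|unsat nbr C0 x|%:R <= theta * s x).
Proof.
have H := unsat_card breg yT x.
have : #|unsat nbr C0 x|%:R <= c%:R * s x :> R by rewrite -natrM ler_nat.
rewrite /kappa => H2.
rewrite mulrAC ler_pdivrMr ?cR //.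
have := ler_wpM2l theta0 H2.
by rewrite mulrCA [_ * c%:R]mulrC.
Qed.

Lemma EW x : good x -> \sum_x' tr x x' * Wt y eta x' <= expR (eta * s x - theta * s x).
Proof.
move=> Hg.
apply: le_trans (W_step C0 y breg c_gt0 d0_gt0 eta x) _.
rewrite /Wt -expRD ler_expR.
have Hs := sgn_sum z0 md breg yT c_gt0 d0_gt0 (Hexp_all Hg).
have Hu : \sum_i uu nbr C0 c d0 y eta x i <=
    - A * (delta - (tpar R d0)^-1) * s x + (B - A) * s x.
  by apply: u_sum => //.
rewrite /theta.
nra.
Qed.

Let tsum1 x : \sum_x' tr x x' = 1 := @trans_sum1 R n m d nbr C0 c d0 x.
Let tge0 x x' : 0 <= tr x x' := @trans_ge0 R n m d nbr C0 c d0 breg c_gt0 d0_gt0 x x'.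
Let sge0 T b x : 0 <= sc T b x := @succ_ge0 R n m d nbr C0 c d0 y breg c_gt0 d0_gt0 T b x.

Lemma h2_ge0 x b : 0 <= h2 x b.
Proof. exact: expR_ge0. Qed.

Lemma q_ge0 : 0 <= q.
Proof. exact: expR_ge0. Qed.

Lemma h2_ge1 x b : (b < #|unsat nbr C0 x|)%N -> 1 <= h2 x b.
Proof.
move=> Hb.
have Hk := kappa_u x.
have kp : 0 <= kappa by rewrite /kappa divr_ge0 // ltW // cR.
have : kappa * b%:R <= kappa * #|unsat nbr C0 x|%:R.
  by rewrite ler_wpM2l // ler_nat ltnW.
have s0 : 0 <= s x by rewrite ler0n.
have := theta_eta => Hte.
have : theta * s x <= eta * s x by rewrite ler_wpM2r.
move=> H1 H2.
apply: le_trans (expR_ge1Dx _); lra.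
Qed.

Lemma main_ind T : forall b x, (b <= T)%N -> good x ->
  1 - sc T b x <= T%:R * q + h2 x b.
Proof.
have qp := q_ge0.
elim: T => [|T IH] b x Hb Hg /=.
  case: ifP => [/eqP U0|U0].
    rewrite (good_done z0 md breg yT c_gt0 d0_gt0 gpos (Hexp_all Hg) U0) eqxx subrr.
    by rewrite mul0r add0r h2_ge0.
  rewrite subr0 mul0r add0r; apply: h2_ge1.
  by move: Hb; rewrite leqn0 => /eqP ->; rewrite card_gt0; apply/negbT.
case: ifP => [/eqP U0|U0].
  rewrite (good_done z0 md breg yT c_gt0 d0_gt0 gpos (Hexp_all Hg) U0) eqxx subrr.
  by rewrite addr_ge0 ?h2_ge0 // mulr_ge0 // ler0n.
case: ifP => Hu; last first.
  rewrite subr0; apply: le_trans (h2_ge1 _) _; first by rewrite ltnNge; exact: negbT Hu.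
  by rewrite lerDr mulr_ge0 // ler0n.
set u := #|unsat nbr C0 x|.
have u1 : (0 < u)%N by rewrite card_gt0; apply/negbT.
have Hb' : (b - u <= T)%N.
  by rewrite leq_subLR; apply: leq_trans Hb _; rewrite -(prednK u1) addSn ltnS leq_addl.
set E := expR (eta * (alpha * n%:R)).
have Ep : 0 < E by apply: expR_gt0.
rewrite -{1}(tsum1 x) -sumrB.
apply: le_trans (_ : \sum_x' tr x x' * (T%:R * q + h2 x' (b - u) + Wt y eta x' / E) <= _).
  apply: ler_sum => x' _.
  rewrite -{1}(mulr1 (tr x x')) -mulrBr ler_wpM2l ?tge0 //.
  have Wp : 0 <= Wt y eta x' / E by rewrite divr_ge0 ?expR_ge0 // ltW.
  case: (boolP (good x')) => Hg'.
    have := IH (b - u)%N x' Hb' Hg'; lra.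
  have s1 : 1 <= Wt y eta x' / E.
    rewrite ler_pdivlMr // mul1r /Wt /E ler_expR.
    rewrite ler_wpM2l //; apply: ltW; rewrite real_ltNge ?num_real //.
  have := sge0 T (b - u) x'.
  have := h2_ge0 x' (b - u).
  have : 0 <= T%:R * q by rewrite mulr_ge0 // ler0n.
  lra.
under eq_bigr do rewrite !mulrDr.
rewrite !big_split /= -mulr_suml tsum1 mul1r.
have EWx := EW Hg.
have -> : \sum_x' tr x x' * h2 x' (b - u) =
    expR (- (kappa * (b - u)%:R)) * \sum_x' tr x x' * Wt y eta x'.
  rewrite mulr_sumr; apply: eq_bigr => x' _.
  by rewrite /h2 /Wt expRD; ring.
have -> : \sum_x' tr x x' * (Wt y eta x' / E) = (\sum_x' tr x x' * Wt y eta x') / E.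
  by rewrite mulr_suml; apply: eq_bigr => x' _; rewrite mulrA.
set M := \sum_x' tr x x' * Wt y eta x'.
have M0 : 0 <= M by apply: sumr_ge0 => x' _; rewrite mulr_ge0 ?expR_ge0 // tge0.
have T2 : expR (- (kappa * (b - u)%:R)) * M <= h2 x b.
  apply: le_trans (_ : expR (- (kappa * (b - u)%:R)) * expR (eta * s x - theta * s x) <= _).
    by rewrite ler_wpM2l ?expR_ge0.
  rewrite -expRD /h2 ler_expR natrB; last exact: Hu.
  have := kappa_u x; rewrite -/u; lra.
have T3 : M / E <= q.
  rewrite ler_pdivrMr // /q /E -expRD.
  apply: le_trans EWx _; rewrite ler_expR.
  move: Hg; rewrite /good => Hg.
  have := theta_eta; have := theta0; nra.
rewrite -addn1 natrD mulrDl mul1r; lra.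
Qed.

End Main.

Unset Implicit Arguments.

Theorem theorem3p6 (R : realType) (c d : nat) (alpha delta : R)
    (C0 : {set word d}) (d0 : nat) :
  (0 < c)%N -> (0 < d)%N ->
  0 < alpha <= 1 -> 0 < delta <= 1 ->
  linear_code C0 -> min_distance C0 d0 ->
  2 < d0%:R * delta ->
  exists K : nat, forall eps : R, 0 < eps -> exists N : nat,
    forall n : nat, (N <= n)%N ->
    forall (m : nat) (nbr : 'I_m -> d.-tuple 'I_n) (x y : word n),
      expander nbr c alpha delta ->
      in_tanner nbr C0 y ->
      (dH x y)%:R <= alpha * n%:R ->
      1 - eps <= success_prob nbr C0 R c d0 y (K * n) x.
Proof.
move=> c_gt0 _ /andP[a0 a1] /andP[dl0 dl1] [z0 _] md Hd0.
have d0_gt0 : (0 < d0)%N.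
  rewrite lt0n; apply/negP => /eqP E; move: Hd0; rewrite E mul0r; lra.
have d0R : 0 < d0%:R :> R by rewrite ltr0n.
set t := tpar R d0.
have tinv : t^-1 = 2 / d0%:R by rewrite /t /tpar invf_div.
set gam := delta - t^-1.
have gpos : 0 < gam.
  rewrite /gam tinv subr_gt0 ltr_pdivrMr //; lra.
have gle1 : gam <= 1.
  rewrite /gam tinv; have : 0 < 2 / d0%:R :> R by rewrite divr_gt0.
  lra.
set eta := gam / 4.
have eta0 : 0 < eta by rewrite /eta divr_gt0.
have eta1 : eta <= 1/4 by rewrite /eta ler_pM2r //; lra.
set A := eta / (1 + eta).
set B := eta / (1 - eta).
have HA : A <= 1 - expR (- eta) by apply: expN_bound; lra.
have HB : expR eta - 1 <= B by apply: exp_upper; apply/andP; split; lra.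
have A0 : 0 <= A by rewrite /A divr_ge0 //; lra.
have Aeta : A <= eta.
  rewrite /A ler_pdivrMr; last lra.
  nra.
have AB : A <= B.
  rewrite /A /B ler_pdivrMr; last lra.
  rewrite mulrAC ler_pdivlMr; last lra.
  nra.
set theta := A * gam - (B - A).
have thE : theta = 2 * eta ^+ 2 * (1 - 2 * eta) / ((1 + eta) * (1 - eta)).
  rewrite /theta /A /B /gam.
  have -> : delta - t^-1 = 4 * eta by rewrite /eta mulrC divfK // pnatr_eq0.
  field; apply/andP; split; rewrite lt0r_neq0 //; lra.
have th0 : 0 < theta.
  rewrite thE; apply: divr_gt0; last by apply: mulr_gt0; lra.
  apply: mulr_gt0; last lra.
  apply: mulr_gt0; first lra.
  by rewrite exprn_gt0.
have th_eta : theta <= eta.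
  rewrite /theta; have : A * gam <= A by rewrite ler_piMr.
  lra.
set kappa := theta / c%:R.
have cR : 0 < c%:R :> R by rewrite ltr0n.
have kp : 0 < kappa by rewrite /kappa divr_gt0.
set K := Num.Def.archi_bound ((eta + theta) / kappa).
have HK : (eta + theta) / kappa < K%:R.
  apply: archi_boundP; rewrite divr_ge0 //; lra.
have HK2 : eta + theta < kappa * K%:R.
  by rewrite mulrC -ltr_pdivrMr.
exists K => eps eps0.
set Z := 4 * (K%:R + 1) / ((theta * alpha) ^+ 2 * eps).
have Z0 : 0 <= Z.
  rewrite /Z divr_ge0 //; last by rewrite mulr_ge0 // ?exprn_ge0 // ltW // mulr_gt0.
  rewrite mulr_ge0 //; last by rewrite addr_ge0 // ler0n.
have HZ := archi_boundP Z0.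
exists (Num.Def.archi_bound Z).+1 => n Hn m nbr x y [breg Hexp] yT Hxy.
have nR : Z < n%:R.
  apply: lt_trans HZ _; rewrite ltr_nat; exact: Hn.
have n1 : 1 <= n%:R :> R.
  rewrite ler1n; apply: leq_trans Hn; by [].
have Hg : good y alpha x by [].
have Hm := @main_ind R n m d nbr C0 c d0 y z0 md breg yT c_gt0 d0_gt0 alpha delta eta A B Hexp
  gpos (ltW eta0) A0 HA HB AB (ltW th0) th_eta (K * n) (K * n) x (leqnn _) Hg.
rewrite /success_prob.
rewrite -/t -/gam -/theta -/kappa in Hm.
set X := theta * (alpha * n%:R).
have Xp : 0 < X by rewrite /X !mulr_gt0 //; lra.
set q := expR (- X).
rewrite -/X -/q in Hm.
have h2le : expR (eta * (#|ES y x|%:R) - kappa * (K * n)%:R) <= q.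
  rewrite ler_expR /X natrM.
  have Hs : #|ES y x|%:R <= alpha * n%:R by [].
  have n0 : 0 <= n%:R :> R by rewrite ler0n.
  have H1 : eta * #|ES y x|%:R <= eta * (alpha * n%:R) by rewrite ler_wpM2l // ltW.
  have H2 : (eta + theta) * n%:R <= kappa * K%:R * n%:R by rewrite ler_wpM2r // ltW.
  have H3 : (eta + theta) * (alpha * n%:R) <= (eta + theta) * n%:R.
    apply: ler_wpM2l; first lra.
    by rewrite ler_piMl.
  lra.
have eX : (1 + X / 2) ^+ 2 <= expR X.
  have -> : expR X = expR (X / 2) * expR (X / 2).
    by rewrite -expRD; congr expR; field.
  rewrite expr2; apply: ler_pM; rewrite ?expR_ge1Dx //; lra.
have qX : ((K * n)%:R + 1) * q <= eps.
  rewrite /q expRN ler_pdivrMr ?expR_gt0 //.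
  apply: le_trans (_ : eps * (1 + X / 2) ^+ 2 <= _); last by rewrite ler_wpM2l // ltW.
  have HZ2 : 4 * (K%:R + 1) < n%:R * ((theta * alpha) ^+ 2 * eps).
    rewrite -ltr_pdivrMr //; first by rewrite mulr_gt0 // exprn_gt0 // mulr_gt0.
  have Kp : 0 <= K%:R :> R by rewrite ler0n.
  have L1 : eps * (X ^+ 2 / 4) <= eps * (1 + X / 2) ^+ 2.
    rewrite ler_wpM2l ?(ltW eps0) //.
    have -> : X ^+ 2 / 4 = (X / 2) ^+ 2 by field.
    rewrite ler_sqr ?nnegrE; lra.
  have L2 : (K%:R + 1) * n%:R <= eps * (X ^+ 2 / 4).
    have n0 : 0 <= n%:R :> R by lra.
    have := ler_wpM2r n0 (ltW HZ2).
    have -> : eps * (X ^+ 2 / 4) = n%:R * ((theta * alpha) ^+ 2 * eps) * n%:R / 4.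
      by rewrite /X; field.
    move=> H; rewrite ler_pdivlMr; last lra.
    lra.
  have L3 : (K * n)%:R + 1 <= (K%:R + 1) * n%:R :> R.
    rewrite natrM mulrDl mul1r; lra.
  lra.
lra.
Qed.
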